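(* Let $K=\mathbb{Z}[v^{\pm1}]$, $q=v^2$, $m\ge1$. The element $b_1:=\sum_{\epsilon\in\{\pm\}^m}I_\epsilon C_\epsilon\overline{\gamma}\in\mathcal{H}_q(\Sigma_{2m})$ is bar-invariant, i.e. $\overline{b_1}=b_1$.
   Context: $\mathcal{H}_q(\Sigma_{2m})$ is the $K$-algebra generated by $T_1,\dots,T_{2m-1}$ with type A braid relations and $T_i^2=(q-1)T_i+q$. $I_w:=v^{-\ell(w)}T_w$, $I_i:=I_{s_i}$. The bar involution is the ring involution with $v\mapsto v^{-1}$ and $I_w\mapsto I_{w^{-1}}^{-1}$. $I_{a\to b}:=I_aI_{a-1}\cdots I_b$ ($a>b$), $I_a$ ($a=b$), $I_aI_{a+1}\cdots I_b$ ($a<b$); $I^+_{a\to b}=I_{a\to b}$, $I^-_{a\to b}=I_{b\to a}^{-1}$. For $\epsilon=(\epsilon_1,\dots,\epsilon_m)\in\{\pm\}^m$: $I_\epsilon:=I^{\epsilon_1}_{m\to2m-1}I^{\epsilon_2}_{m-1\to2m-2}\cdots I^{\epsilon_m}_{1\to m}$ and $C_\epsilon:=\prod_{i:\epsilon_i=-}c_{m,m-i}$, where $c_{m,0}=1$, $c_{m,i}=I_{m+i\to m+1}I_{m+1\to m+i}$ ($i\ge1$). $\gamma:=\pi_m(I_{w_0^{(m)}})$ where $w_0^{(m)}$ is the longest element of $\Sigma_m$ and $\pi_m$ shifts $T_i\mapsto T_{i+m}$. (In the paper $b_1=v^{-m(2m-1)}H_1\overline{\gamma}$, where $H_1$ is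 the extra generator of the Hu algebra.) *)

(* Defs.v *)
From HB Require Import structures.
From mathcomp Require Import all_boot all_order all_algebra.
Set Implicit Arguments. Unset Strict Implicit. Unset Printing Implicit Defensive.
Import GRing.Theory.
Local Open Scope ring_scope.

(* The Iwahori-Hecke algebra H_q(Sigma_n) over K = Z[v, v^-1] is presented by
   generators T_1 .. T_{n-1}.  A K-algebra is the same as a ring A together
   with a central unit v (the image of v in A).  [hecke_relations v T n] says
   that T_1, ..., T_{n-1} in A satisfy the type A braid relations and the
   quadratic relation T_i^2 = (q-1) T_i + q with q = v^2. *)
Definition hecke_relations (A : unitRingType) (v : A) (T : nat -> A) (n : nat)
  : Prop :=
  [/\ (forall x : A, v * x = x * v),
      v \is a GRing.unit,
      (forall i : nat, (1 <= i < n)%N -> T i ^+ 2 = (v ^+ 2 - 1) * T i + v ^+ 2),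
      (forall i : nat, (1 <= i)%N -> (i.+1 < n)%N ->
          T i * T i.+1 * T i = T i.+1 * T i * T i.+1)
    & (forall i j : nat, (1 <= i < n)%N -> (1 <= j < n)%N -> (i.+1 < j)%N ->
          T i * T j = T j * T i)].

(* I_i := v^{-1} T_i  (= I_{s_i} = v^{-l(s_i)} T_{s_i}) *)
Definition Hgen (A : unitRingType) (v : A) (T : nat -> A) (i : nat) : A :=
  v^-1 * T i.

Definition arrow_seq (a b : nat) : seq nat :=
  if (b <= a)%N then rev (iota b (a - b).+1) else iota a (b - a).+1.

Definition Iarrow (A : unitRingType) (v : A) (T : nat -> A) (a b : nat) : A :=
  \prod_(k <- arrow_seq a b) Hgen v T k.

(* I^+_{a -> b} = I_{a -> b},  I^-_{a -> b} = (I_{b -> a})^{-1};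
   the sign + is encoded by true, - by false. *)
Definition Ipm (A : unitRingType) (v : A) (T : nat -> A) (e : bool) (a b : nat)
  : A :=
  if e then Iarrow v T a b else (Iarrow v T b a)^-1.

(* I_eps = I^{eps_1}_{m -> 2m-1} I^{eps_2}_{m-1 -> 2m-2} ... I^{eps_m}_{1 -> m};
   the index k : 'I_m stands for eps_{k+1}. *)
Definition Ieps (A : unitRingType) (v : A) (T : nat -> A) (m : nat)
  (e : {ffun 'I_m -> bool}) : A :=
  \prod_(k < m) Ipm v T (e k) (m - k) (2 * m - 1 - k).

Definition cJM (A : unitRingType) (v : A) (T : nat -> A) (m i : nat) : A :=
  if i == 0%N then 1 else Iarrow v T (m + i) (m + 1) * Iarrow v T (m + 1) (m + i).

(* C_eps = prod_{i : eps_i = -} c_{m, m-i}  (i = k+1, increasing order) *)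
Definition Ceps (A : unitRingType) (v : A) (T : nat -> A) (m : nat)
  (e : {ffun 'I_m -> bool}) : A :=
  \prod_(k < m | ~~ e k) cJM v T m (m - k.+1).

(* gamma = pi_m(I_{w_0^{(m)}}), computed from the reduced word
   w_0 = (s_1)(s_2 s_1)...(s_{m-1} ... s_1) of the longest element of Sigma_m,
   so I_{w_0} = I_{1->1} I_{2->1} ... I_{m-1 -> 1}, shifted by m. *)
Definition gammaH (A : unitRingType) (v : A) (T : nat -> A) (m : nat) : A :=
  \prod_(1 <= j < m) Iarrow v T (m + j) (m + 1).

Definition b1 (A : unitRingType) (v : A) (T : nat -> A) (m : nat)
  (bar : A -> A) : A :=
  \sum_(e : {ffun 'I_m -> bool}) Ieps v T e * Ceps v T e * bar (gammaH v T m).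

(* Main.v *)
Require Import Defs.
From HB Require Import structures.
From mathcomp Require Import all_boot all_order all_algebra.
From mathcomp Require Import zify.
Import GRing.Theory.
Local Open Scope ring_scope.

Module Helpers.
Set Implicit Arguments. Unset Strict Implicit. Unset Printing Implicit Defensive.

Definition up (A : unitRingType) (g : nat -> A) (a n : nat) : A :=
  \prod_(k <- iota a n) g k.
Definition dn (A : unitRingType) (g : nat -> A) (a n : nat) : A :=
  \prod_(k <- rev (iota a n)) g k.

Definition braidH (A : unitRingType) (g : nat -> A) (lo hi : nat) :=
  forall i, (lo <= i)%N -> (i.+1 <= hi)%N -> g i * g i.+1 * g i = g i.+1 * g i * g i.+1.
Definition commH (A : unitRingType) (g : nat -> A) (lo hi : nat) :=
  forall i j, (lo <= i)%N -> (j <= hi)%N -> (i.+1 < j)%N -> GRing.comm (g i) (g j).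

Lemma upS (A : unitRingType) (g : nat -> A) a n : up g a n.+1 = g a * up g a.+1 n.
Proof. by rewrite /up /= big_cons. Qed.

Lemma dnS (A : unitRingType) (g : nat -> A) a n : dn g a n.+1 = g (a + n)%N * dn g a n.
Proof. by rewrite /dn -addn1 iotaD rev_cat /= big_cons. Qed.

Lemma up_comm (A : unitRingType) (g : nat -> A) x a n :
  (forall k, (a <= k < a + n)%N -> GRing.comm x (g k)) -> GRing.comm x (up g a n).
Proof.
elim: n a => [|n IH] a H; first by rewrite /up big_nil; exact: commr1.
rewrite upS; apply: commrM; first by apply: H; rewrite leqnn /=; lia.
by apply: IH => k /andP[h1 h2]; apply: H; apply/andP; split; lia.
Qed.

Lemma dn_comm (A : unitRingType) (g : nat -> A) x a n :
  (forall k, (a <= k < a + n)%N -> GRing.comm x (g k)) -> GRing.comm x (dn g a n).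
Proof.
elim: n => [|n IH] H; first by rewrite /dn big_nil; exact: commr1.
rewrite dnS; apply: commrM; first by apply: H; apply/andP; split; lia.
by apply: IH => k /andP[h1 h2]; apply: H; apply/andP; split; lia.
Qed.

Lemma up_shift (A : unitRingType) (g : nat -> A) lo hi a n l :
  braidH g lo hi -> commH g lo hi ->
  (lo <= a)%N -> (a + n <= hi.+1)%N -> (a <= l)%N -> (l.+1 < a + n)%N ->
  up g a n * g l = g l.+1 * up g a n.
Proof.
move=> hb hc; elim: n a => [|n IH] a h1 h2 h3 h4; first by lia.
rewrite upS; have [alt|aeq] := ltnP a l.
  rewrite -mulrA IH; try lia.
  rewrite !mulrA; congr (_ * _); apply: hc; lia.
have E : a = l by lia.
subst a.
case: n IH h2 h4 => [|n] IH h2 h4; first by lia.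
rewrite upS.
have cW : GRing.comm (g l) (up g l.+2 n).
  apply: up_comm => k hk; apply: hc; lia.
rewrite -!mulrA -cW !mulrA hb //; lia.
Qed.

Lemma dn_shift (A : unitRingType) (g : nat -> A) lo hi a n l :
  braidH g lo hi -> commH g lo hi ->
  (lo <= a)%N -> (a + n <= hi.+1)%N -> (a <= l)%N -> (l.+1 < a + n)%N ->
  dn g a n * g l.+1 = g l * dn g a n.
Proof.
move=> hb hc; elim: n => [|n IH] h1 h2 h3 h4; first by lia.
rewrite dnS; have [lt|eq] := ltnP l.+1 (a + n).
  rewrite -mulrA IH; try lia.
  rewrite !mulrA; congr (_ * _); symmetry; apply: hc; lia.
case: n IH h2 h4 lt eq => [|n] IH h2 h4 lt eq; first by lia.
have El : (a + n = l)%N by lia.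
have E1 : (a + n.+1 = l.+1)%N by lia.
rewrite dnS El E1.
have cW : GRing.comm (g l.+1) (dn g a n).
  apply: dn_comm => k hk; apply: commr_sym; apply: hc; lia.
rewrite -!mulrA -cW !mulrA hb //; lia.
Qed.

Lemma prod_inv_split (A : unitRingType) (I : Type) (r : seq I) (P : pred I) (f : I -> A) :
  (forall i j, GRing.comm (f i) (f j)) -> (forall i, f i \is a GRing.unit) ->
  \prod_(i <- r | P i) (f i)^-1 * \prod_(i <- r) f i = \prod_(i <- r | ~~ P i) f i.
Proof.
move=> hc hu; elim: r => [|x r IH]; first by rewrite !big_nil mulr1.
rewrite !big_cons.
have cQ : GRing.comm (f x) (\prod_(i <- r | P i) (f i)^-1).
  by apply: commr_prod => i _; apply: commrV.
case: (P x) => /=.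
  by rewrite -mulrA [_ * (f x * _)]mulrA -cQ -mulrA mulKr ?IH.
by rewrite mulrA -cQ -mulrA IH.
Qed.

Lemma arrow_up (A : unitRingType) (v : A) (T : nat -> A) a b :
  (a <= b)%N -> Iarrow v T a b = up (Hgen v T) a (b - a).+1.
Proof.
move=> h; rewrite /Iarrow /arrow_seq /up; case: ifP => h2 //.
have -> : b = a by lia.
by rewrite subnn /= big_cons.
Qed.

Lemma arrow_dn (A : unitRingType) (v : A) (T : nat -> A) a b :
  (b <= a)%N -> Iarrow v T a b = dn (Hgen v T) b (a - b).+1.
Proof. by move=> h; rewrite /Iarrow /arrow_seq /dn h. Qed.

Lemma arrow_seq_rev a b : arrow_seq b a = rev (arrow_seq a b).
Proof.
rewrite /arrow_seq; case: (leqP a b) => h1; case: (leqP b a) => h2 //.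
- have E : a = b by lia.
  by subst; rewrite subnn.
- by rewrite revK.
- lia.
Qed.

Lemma arrow_seq_mem a b k : k \in arrow_seq a b -> (minn a b <= k <= maxn a b)%N.
Proof. rewrite /arrow_seq; case: ifP => h; rewrite ?mem_rev mem_iota => /andP[]; lia. Qed.

Lemma central_inv (A : unitRingType) (v : A) :
  (forall x, v * x = x * v) -> forall x, v^-1 * x = x * v^-1.
Proof. by move=> h x; symmetry; apply: commrV. Qed.

Lemma cmw (A : unitRingType) (w : A) :
  (forall x, w * x = x * w) -> forall u a b, u * a * (w * b) = u * w * (a * b).
Proof. move=> hw u a b; rewrite -!mulrA; congr (u * _); by rewrite mulrA -(hw a) -mulrA. Qed.

Lemma hecke_braid (A : unitRingType) (v : A) (T : nat -> A) n :
  hecke_relations v T n -> braidH (Hgen v T) 1 n.-1.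
Proof.
case=> hv _ _ hbr _ i h1 h2; rewrite /Hgen.
have hw := cmw (central_inv hv).
have E : forall a b c, v^-1 * a * (v^-1 * b) * (v^-1 * c) = v^-1 * v^-1 * v^-1 * (a * b * c).
  by move=> a b c; rewrite (hw v^-1 a b) (hw (v^-1 * v^-1) (a * b) c).
rewrite !E hbr //; lia.
Qed.

Lemma hecke_comm (A : unitRingType) (v : A) (T : nat -> A) n :
  hecke_relations v T n -> commH (Hgen v T) 1 n.-1.
Proof.
case=> hv _ _ _ hco i j h1 h2 h3; rewrite /Hgen /GRing.comm.
have hw := cmw (central_inv hv).
rewrite !(hw v^-1) hco //; lia.
Qed.

Lemma hecke_unit (A : unitRingType) (v : A) (T : nat -> A) n i :
  hecke_relations v T n -> (1 <= i < n)%N -> Hgen v T i \is a GRing.unit.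
Proof.
case=> hv vu hq _ _ hi.
have qu : v ^+ 2 \is a GRing.unit by rewrite unitrX.
have qc : forall x, (v ^+ 2)^-1 * x = x * (v ^+ 2)^-1.
  move=> x; symmetry; apply: commrV; apply: commrX; exact: (esym (hv x)).
have cc : T i * (v ^+ 2 - 1) = (v ^+ 2 - 1) * T i.
  apply: commrB; last exact: commr1.
  apply: commrX; exact: (esym (hv _)).
have Tu : T i \is a GRing.unit.
  apply/unitrP; exists ((v ^+ 2)^-1 * (T i - (v ^+ 2 - 1))); split.
    rewrite -mulrA mulrBl -expr2 hq //.
    by rewrite [(v ^+ 2 - 1) * T i + _]addrC addrK mulVr.
  rewrite mulrA -qc -mulrA mulrBr -expr2 cc hq //.
  by rewrite [(v ^+ 2 - 1) * T i + _]addrC addrK mulVr.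
by rewrite /Hgen unitrMl // unitrV.
Qed.

Lemma prod_unit (A : unitRingType) (v : A) (T : nat -> A) n (s : seq nat) :
  (forall i, (1 <= i < n)%N -> Hgen v T i \is a GRing.unit) ->
  (forall k, k \in s -> (1 <= k < n)%N) ->
  \prod_(k <- s) Hgen v T k \is a GRing.unit.
Proof.
move=> hu; elim: s => [|x s IH] hs; first by rewrite big_nil unitr1.
rewrite big_cons unitrMl; last by apply: IH => k hk; apply: hs; rewrite inE hk orbT.
by apply: hu; apply: hs; rewrite inE eqxx.
Qed.

Lemma bar_prod (A : unitRingType) (v : A) (T : nat -> A) n (bar : {rmorphism A -> A}) (s : seq nat) :
  (forall i, (1 <= i < n)%N -> Hgen v T i \is a GRing.unit) ->
  (forall i, (1 <= i < n)%N -> bar (Hgen v T i) = (Hgen v T i)^-1) ->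
  (forall k, k \in s -> (1 <= k < n)%N) ->
  bar (\prod_(k <- s) Hgen v T k) = (\prod_(k <- rev s) Hgen v T k)^-1.
Proof.
move=> hu hbar; elim: s => [|x s IH] hs; first by rewrite !big_nil rmorph1 invr1.
have hs' : forall k, k \in s -> (1 <= k < n)%N.
  by move=> k hk; apply: hs; rewrite inE hk orbT.
have hx : (1 <= x < n)%N by apply: hs; rewrite inE eqxx.
rewrite big_cons rmorphM IH // rev_cons big_rcons /= invrM ?hu //.
  by rewrite hbar.
by apply: prod_unit hu _ => k; rewrite mem_rev; apply: hs'.
Qed.

Lemma Iarrow_unit (A : unitRingType) (v : A) (T : nat -> A) n a b :
  (forall i, (1 <= i < n)%N -> Hgen v T i \is a GRing.unit) ->
  (1 <= a < n)%N -> (1 <= b < n)%N -> Iarrow v T a b \is a GRing.unit.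
Proof.
move=> hu ha hb; apply: prod_unit hu _ => k /arrow_seq_mem; lia.
Qed.

Lemma bar_Iarrow (A : unitRingType) (v : A) (T : nat -> A) n (bar : {rmorphism A -> A}) a b :
  (forall i, (1 <= i < n)%N -> Hgen v T i \is a GRing.unit) ->
  (forall i, (1 <= i < n)%N -> bar (Hgen v T i) = (Hgen v T i)^-1) ->
  (1 <= a < n)%N -> (1 <= b < n)%N -> bar (Iarrow v T a b) = (Iarrow v T b a)^-1.
Proof.
move=> hu hbar ha hb; rewrite /Iarrow (bar_prod hu hbar); last first.
  by move=> k hk; have := arrow_seq_mem hk; lia.
by rewrite -arrow_seq_rev.
Qed.

Lemma bar_Ipm (A : unitRingType) (v : A) (T : nat -> A) n (bar : {rmorphism A -> A}) e a b :
  (forall i, (1 <= i < n)%N -> Hgen v T i \is a GRing.unit) ->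
  (forall i, (1 <= i < n)%N -> bar (Hgen v T i) = (Hgen v T i)^-1) ->
  (1 <= a < n)%N -> (1 <= b < n)%N -> bar (Ipm v T e a b) = Ipm v T (~~ e) a b.
Proof.
move=> hu hbar ha hb; rewrite /Ipm; case: e => /=.
  exact: (bar_Iarrow hu hbar).
rewrite rmorphV; last exact: (Iarrow_unit hu).
by rewrite (bar_Iarrow hu hbar) // invrK.
Qed.

Definition negf m (e : {ffun 'I_m -> bool}) : {ffun 'I_m -> bool} := [ffun k => ~~ e k].

Lemma negf_inj m : injective (@negf m).
Proof.
move=> e1 e2 /ffunP h; apply/ffunP => k; have := h k.
by rewrite /negf !ffunE; case: (e1 k); case: (e2 k).
Qed.

Lemma bar_Ieps (A : unitRingType) (v : A) (T : nat -> A) m (bar : {rmorphism A -> A}) (e : {ffun 'I_m -> bool}) :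
  (1 <= m)%N ->
  (forall i, (1 <= i < 2 * m)%N -> Hgen v T i \is a GRing.unit) ->
  (forall i, (1 <= i < 2 * m)%N -> bar (Hgen v T i) = (Hgen v T i)^-1) ->
  bar (Ieps v T e) = Ieps v T (negf e).
Proof.
move=> hm hu hbar; rewrite /Ieps rmorph_prod; apply: eq_bigr => k _.
rewrite /negf ffunE (bar_Ipm _ hu hbar) //; have := ltn_ord k; lia.
Qed.

Lemma c_eq (A : unitRingType) (v : A) (T : nat -> A) m j :
  (1 <= j)%N ->
  cJM v T m j = dn (Hgen v T) (m + 1) j * up (Hgen v T) (m + 1) j.
Proof.
move=> hj; rewrite /cJM; case: eqP => [|_]; first by lia.
rewrite arrow_dn ?arrow_up; try lia.
by have -> : ((m + j) - (m + 1)).+1 = j by lia.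
Qed.

Lemma c_commI (A : unitRingType) (v : A) (T : nat -> A) m j l :
  (1 <= m)%N ->
  braidH (Hgen v T) 1 (2 * m).-1 -> commH (Hgen v T) 1 (2 * m).-1 ->
  (1 <= l)%N -> (l < j)%N -> (j < m)%N ->
  GRing.comm (cJM v T m j) (Hgen v T (m + l)).
Proof.
move=> hm hb hc hl hlj hj; rewrite /GRing.comm c_eq; last by lia.
rewrite -mulrA (up_shift hb hc); try lia.
rewrite mulrA (dn_shift hb hc); try lia.
by rewrite mulrA.
Qed.

Lemma c_unit (A : unitRingType) (v : A) (T : nat -> A) m j :
  (forall i, (1 <= i < 2 * m)%N -> Hgen v T i \is a GRing.unit) ->
  (j < m)%N -> cJM v T m j \is a GRing.unit.
Proof.
move=> hu hj; rewrite /cJM; case: eqP => [_|hj0]; first exact: unitr1.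
rewrite unitrMl; apply: (Iarrow_unit hu); lia.
Qed.

Lemma bar_c (A : unitRingType) (v : A) (T : nat -> A) m (bar : {rmorphism A -> A}) j :
  (forall i, (1 <= i < 2 * m)%N -> Hgen v T i \is a GRing.unit) ->
  (forall i, (1 <= i < 2 * m)%N -> bar (Hgen v T i) = (Hgen v T i)^-1) ->
  (j < m)%N -> bar (cJM v T m j) = (cJM v T m j)^-1.
Proof.
move=> hu hbar hj; rewrite /cJM; case: eqP => [_|hj0]; first by rewrite rmorph1 invr1.
rewrite rmorphM !(bar_Iarrow hu hbar); try lia.
rewrite invrM //; apply: (Iarrow_unit hu); lia.
Qed.

Lemma c_comm_lt (A : unitRingType) (v : A) (T : nat -> A) m i j :
  (1 <= m)%N ->
  braidH (Hgen v T) 1 (2 * m).-1 -> commH (Hgen v T) 1 (2 * m).-1 ->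
  (i < j)%N -> (j < m)%N -> GRing.comm (cJM v T m i) (cJM v T m j).
Proof.
move=> hm hb hc hij hj.
case: (posnP i) => [->|hi]; first by rewrite /cJM eqxx; apply: commr_sym; apply: commr1.
apply: commr_sym; rewrite (c_eq _ _ _ hi).
have H : forall k, (m + 1 <= k < m + 1 + i)%N -> GRing.comm (cJM v T m j) (Hgen v T k).
  move=> k hk; have -> : k = (m + (k - m))%N by lia.
  apply: c_commI => //; lia.
by apply: commrM; [apply: dn_comm | apply: up_comm].
Qed.

Lemma c_comm (A : unitRingType) (v : A) (T : nat -> A) m i j :
  (1 <= m)%N ->
  braidH (Hgen v T) 1 (2 * m).-1 -> commH (Hgen v T) 1 (2 * m).-1 ->
  (i < m)%N -> (j < m)%N -> GRing.comm (cJM v T m i) (cJM v T m j).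
Proof.
move=> hm hb hc hi hj; case: (ltngtP i j) => h.
- exact: c_comm_lt.
- by apply: commr_sym; apply: c_comm_lt.
- by rewrite h; apply: commr_refl.
Qed.

Definition Gj (A : unitRingType) (v : A) (T : nat -> A) m j :=
  \prod_(1 <= i < j.+1) Iarrow v T (m + i) (m + 1).
Definition Pj (A : unitRingType) (v : A) (T : nat -> A) m j :=
  \prod_(k < j) cJM v T m (j - k).

Lemma gamma_split (A : unitRingType) (v : A) (T : nat -> A) m (bar : {rmorphism A -> A}) j :
  (1 <= m)%N ->
  braidH (Hgen v T) 1 (2 * m).-1 -> commH (Hgen v T) 1 (2 * m).-1 ->
  (forall i, (1 <= i < 2 * m)%N -> Hgen v T i \is a GRing.unit) ->
  (forall i, (1 <= i < 2 * m)%N -> bar (Hgen v T i) = (Hgen v T i)^-1) ->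
  (j < m)%N -> Gj v T m j = Pj v T m j * bar (Gj v T m j).
Proof.
move=> hm hb hc hu hbar; elim: j => [|j IH] hj.
  by rewrite /Gj /Pj big_geq // big_ord0 rmorph1 mulr1.
have hbG : bar (Gj v T m j) = \prod_(1 <= i < j.+1) (up (Hgen v T) (m + 1) i)^-1.
  rewrite /Gj rmorph_prod big_nat_cond [RHS]big_nat_cond.
  apply: eq_bigr => i /andP[/andP[h1 h2] _].
  rewrite (bar_Iarrow hu hbar); try lia.
  rewrite arrow_up; last by lia.
  by have -> : ((m + i) - (m + 1)).+1 = i by lia.
pose c := cJM v T m j.+1.
have cG : GRing.comm c (bar (Gj v T m j)).
  rewrite hbG big_nat_cond; apply: commr_prod => i /andP[/andP[h1 h2] _].
  apply: commrV; apply: up_comm => k hk.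
  have -> : k = (m + (k - m))%N by lia.
  apply: c_commI => //; lia.
have cP : GRing.comm c (Pj v T m j).
  apply: commr_prod => k _; apply: c_comm => //; lia.
have hU : Iarrow v T (m + 1) (m + j.+1) \is a GRing.unit.
  apply: (Iarrow_unit hu); lia.
have ED : Iarrow v T (m + j.+1) (m + 1) = c * (Iarrow v T (m + 1) (m + j.+1))^-1.
  by rewrite /c /cJM /= mulrK.
have EG : Gj v T m j.+1 = Gj v T m j * Iarrow v T (m + j.+1) (m + 1).
  by rewrite /Gj big_nat_recr.
have EP : Pj v T m j.+1 = c * Pj v T m j.
  by rewrite /Pj big_ord_recl subn0.
clearbody c.
rewrite EG EP rmorphM (bar_Iarrow hu hbar); try lia.
rewrite {1}IH; last by lia.
rewrite ED.
have E2 : Pj v T m j * bar (Gj v T m j) * c = c * Pj v T m j * bar (Gj v T m j).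
  by rewrite -mulrA -cG mulrA -cP.
by rewrite !mulrA E2.
Qed.

Lemma Cfull (A : unitRingType) (v : A) (T : nat -> A) M n :
  \prod_(k < n.+1) cJM v T M (n.+1 - k.+1) = Pj v T M n.
Proof.
rewrite big_ord_recr /= subnn /cJM eqxx mulr1 /Pj.
by apply: eq_bigr => k _; rewrite subSS.
Qed.

End Helpers.
Import Helpers.

Theorem proposition6p11 (A : unitRingType) (v : A) (T : nat -> A) (m : nat)
    (bar : {rmorphism A -> A}) :
  (1 <= m)%N ->
  hecke_relations v T (2 * m) ->
  bar v = v^-1 ->
  (forall i : nat, (1 <= i < 2 * m)%N -> bar (Hgen v T i) = (Hgen v T i)^-1) ->
  (forall x : A, bar (bar x) = x) ->
  bar (b1 v T m bar) = b1 v T m bar.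
Proof.
move=> hm hrel hv hbar hinv.
have hb := hecke_braid hrel.
have hc := hecke_comm hrel.
have hu : forall i, (1 <= i < 2 * m)%N -> Hgen v T i \is a GRing.unit.
  by move=> i hi; apply: hecke_unit hrel hi.
have hG : gammaH v T m = Pj v T m m.-1 * bar (gammaH v T m).
  have E : gammaH v T m = Gj v T m m.-1 by rewrite /gammaH /Gj prednK.
  by rewrite E; apply: gamma_split => //; lia.
have hCf : \prod_(k < m) cJM v T m (m - k.+1) = Pj v T m m.-1.
  by have := Cfull v T m m.-1; rewrite prednK.
have key : forall e : {ffun 'I_m -> bool},
    bar (Ceps v T e) * gammaH v T m = Ceps v T (negf e) * bar (gammaH v T m).
  move=> e; rewrite {1}hG mulrA -hCf /Ceps rmorph_prod.
  rewrite (eq_bigr (fun k : 'I_m => (cJM v T m (m - k.+1))^-1)); last first.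
    by move=> k _; rewrite (bar_c hu hbar) //; lia.
  rewrite prod_inv_split; last first.
  - by move=> k; apply: c_unit hu _; lia.
  - by move=> i j; apply: c_comm => //; lia.
  congr (_ * _); apply: eq_bigl => k; by rewrite /negf ffunE.
rewrite /b1 rmorph_sum [RHS](reindex_inj (@negf_inj m)) /=.
apply: eq_bigr => e _.
by rewrite !rmorphM hinv (bar_Ieps e hm hu hbar) -mulrA key mulrA.
Qed.
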